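(* Let $f:\mathbb{R}^n\to\mathbb{R}$ be $L$-smooth and $\mu$-strongly convex with $0<\mu<L$ and minimizer $x_*$, and let $R=\|x^0-x_*\|_2$. Then the iterates of Algorithm AGMsDR-SC (either option) satisfy, for every $k\ge1$, $$f(x^k)-f(x_* )\le\min\left\{\frac{2LR^2}{k^2},\ \left(1-\sqrt{\frac\mu L}\right)^{k-1}LR^2\right\}.$$
   Context: $\|\cdot\|=\|\cdot\|_2$ is the Euclidean norm on $\mathbb{R}^n$. $f$ is $L$-smooth if it is continuously differentiable with $\|\nabla f(x)-\nabla f(y)\|_2\le L\|x-y\|_2$ for all $x,y$; $f$ is $\mu$-strongly convex if $f(y)\ge f(x)+\langle\nabla f(x),y-x\rangle+\frac\mu2\|y-x\|_2^2$ for all $x,y$. Algorithm AGMsDR-SC (input $x^0$, and $L$ for Option (a)): set $A_0=0$, $\tau_0=1$, $v^0=x^0$, $\psi_0(x)=\frac12\|x-x^0\|_2^2$. For $k=0,1,2,\dots$: 1. Choose $\beta_k\in\arg\min_{\beta\in[0,1]} f(v^k+\beta(x^k-v^k))$ and set $y^k=v^k+\beta_k(x^k-v^k)$. 2. Option (a): $x^{k+1}=y^k-\frac1L\nabla f(y^k)$, and $a_{k+1}>0$ solves $\frac{a_{k+1}^2}{(\tau_k+\mu a_{k+1})(A_k+a_{k+1})}=\frac1L$. Option (b): $h_{k+1}\in\arg\min_{h\ge0}f\big(y^k-h\,\nabla f(y^k)/\|\nabla f(y^k)\|_2\big)$, $x^{k+1}=y^k-h_{k+1}\nabla f(y^k)/\|\nabla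 f(y^k)\|_2$, and $a_{k+1}$ is the largest solution of $$f(y^k)-\frac{a_{k+1}^2\|\nabla f(y^k)\|_2^2}{2(\tau_k+\mu a_{k+1})(A_k+a_{k+1})}+\frac{\mu\tau_ka_{k+1}\|v^k-y^k\|_2^2}{2(\tau_k+\mu a_{k+1})(A_k+a_{k+1})}=f(x^{k+1}).$$ 3. $A_{k+1}=A_k+a_{k+1}$, $\tau_{k+1}=\tau_k+\mu a_{k+1}$; $\psi_{k+1}(x)=\psi_k(x)+a_{k+1}\{f(y^k)+\langle\nabla f(y^k),x-y^k\rangle+\frac\mu2\|x-y^k\|_2^2\}$; $v^{k+1}=\arg\min_x\psi_{k+1}(x)$. All minima are assumed attained and $\nabla f(y^k)\neq0$ for all iterations considered. *)

(* Defs.v *)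
From Stdlib Require Fin.
From Stdlib Require Import Reals Lra.
Open Scope R_scope.

Definition vec (n : nat) := Fin.t n -> R.

Fixpoint sumFin (n : nat) : (Fin.t n -> R) -> R :=
  match n with
  | O => fun _ => 0
  | S m => fun h => h Fin.F1 + sumFin m (fun i => h (Fin.FS i))
  end.

Definition vadd {n} (x y : vec n) : vec n := fun i => x i + y i.
Definition vsub {n} (x y : vec n) : vec n := fun i => x i - y i.
Definition vscal {n} (c : R) (x : vec n) : vec n := fun i => c * x i.
Definition vzero {n} : vec n := fun _ => 0.
Definition inner {n} (x y : vec n) : R := sumFin n (fun i => x i * y i).
Definition norm2 {n} (x : vec n) : R := sqrt (inner x x).

Definition is_gradient {n} (f : vec n -> R) (g : vec n -> vec n) : Prop :=
  forall x eps, 0 < eps -> exists delta, 0 < delta /\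
    forall h : vec n, 0 < norm2 h < delta ->
      Rabs (f (vadd x h) - f x - inner (g x) h) <= eps * norm2 h.

(* L-smooth: continuously differentiable with L-Lipschitz gradient
   (continuity of the gradient follows from the Lipschitz condition). *)
Definition L_smooth {n} (f : vec n -> R) (g : vec n -> vec n) (L : R) : Prop :=
  is_gradient f g /\
  forall x y, norm2 (vsub (g x) (g y)) <= L * norm2 (vsub x y).

Definition strongly_convex {n} (f : vec n -> R) (g : vec n -> vec n) (mu : R) : Prop :=
  forall x y, f y >= f x + inner (g x) (vsub y x) + mu / 2 * (norm2 (vsub y x)) ^ 2.

Inductive agm_option := OptA | OptB.

Fixpoint psi {n} (f : vec n -> R) (g : vec n -> vec n) (mu : R) (x0 : vec n)
    (y : nat -> vec n) (a : nat -> R) (k : nat) (z : vec n) : R :=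
  match k with
  | O => / 2 * (norm2 (vsub z x0)) ^ 2
  | S j => psi f g mu x0 y a j z +
           a (S j) * (f (y j) + inner (g (y j)) (vsub z (y j))
                      + mu / 2 * (norm2 (vsub z (y j))) ^ 2)
  end.

(* The minimizers chosen (beta_k, h_{k+1}, v^{k+1}) are arbitrary elements of the
   respective argmin sets. *)
Definition AGMsDR_SC_run {n} (opt : agm_option) (f : vec n -> R) (g : vec n -> vec n)
    (L mu : R) (x0 : vec n)
    (x v y : nat -> vec n) (beta h a A tau : nat -> R) : Prop :=
  A 0%nat = 0 /\ tau 0%nat = 1 /\ x 0%nat = x0 /\ v 0%nat = x0 /\
  forall k : nat,
    (0 <= beta k <= 1 /\
     (forall b, 0 <= b <= 1 ->
        f (vadd (v k) (vscal (beta k) (vsub (x k) (v k))))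
        <= f (vadd (v k) (vscal b (vsub (x k) (v k))))) /\
     y k = vadd (v k) (vscal (beta k) (vsub (x k) (v k)))) /\
    (match opt with
     | OptA =>
         x (S k) = vsub (y k) (vscal (/ L) (g (y k))) /\
         0 < a (S k) /\
         a (S k) ^ 2 / ((tau k + mu * a (S k)) * (A k + a (S k))) = / L
     | OptB =>
         let d := vscal (/ norm2 (g (y k))) (g (y k)) in
         0 <= h (S k) /\
         (forall t, 0 <= t -> f (vsub (y k) (vscal (h (S k)) d)) <= f (vsub (y k) (vscal t d))) /\
         x (S k) = vsub (y k) (vscal (h (S k)) d) /\
         let eqn := fun al : R =>
           (tau k + mu * al) * (A k + al) <> 0 /\
           f (y k)
           - al ^ 2 * (norm2 (g (y k))) ^ 2 / (2 * (tau k + mu * al) * (A k + al))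
           + mu * tau k * al * (norm2 (vsub (v k) (y k))) ^ 2
               / (2 * (tau k + mu * al) * (A k + al))
           = f (x (S k)) in
         eqn (a (S k)) /\ (forall al, eqn al -> al <= a (S k))
     end) /\
    A (S k) = A k + a (S k) /\
    tau (S k) = tau k + mu * a (S k) /\
    (forall z, psi f g mu x0 y a (S k) (v (S k)) <= psi f g mu x0 y a (S k) z).

(* Main.v *)
Require Import Defs.
From Stdlib Require Import Reals Lra Psatz FunctionalExtensionality.
Open Scope R_scope.

Lemma sumFin_ext n (F G : Fin.t n -> R) : (forall i, F i = G i) -> sumFin n F = sumFin n G.
Proof. induction n; simpl; intros H; [reflexivity|]. rewrite H. f_equal. apply IHn. intros; apply H. Qed.

Lemma inner_nonneg n (x : vec n) : 0 <= inner x x.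
Proof. unfold inner. induction n; simpl. lra.
  specialize (IHn (fun i => x (Fin.FS i))). simpl in IHn. nra. Qed.

Lemma norm2_sq n (x : vec n) : norm2 x ^ 2 = inner x x.
Proof. unfold norm2. simpl. rewrite Rmult_1_r. apply sqrt_sqrt, inner_nonneg. Qed.

Lemma inner_zero_eq n (x : vec n) : inner x x = 0 -> forall i, x i = 0.
Proof. unfold inner. induction n; simpl; intros H i.
  - inversion i.
  - pose proof (inner_nonneg n (fun i => x (Fin.FS i))) as Hn. unfold inner in Hn.
    assert (x Fin.F1 = 0) by nra.
    assert (Ht : sumFin n (fun i => x (Fin.FS i) * x (Fin.FS i)) = 0) by nra.
    specialize (IHn _ Ht).
    pattern i. apply Fin.caseS'; [exact H0 | intros j; exact (IHn j)]. Qed.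

Lemma vec_eq n (x y : vec n) : (forall i, x i = y i) -> x = y.
Proof. intros; apply functional_extensionality; auto. Qed.

Lemma inner_pos n (x : vec n) : x <> vzero -> 0 < inner x x.
Proof. intros H. destruct (inner_nonneg n x) as [|E]; auto.
  exfalso; apply H. apply vec_eq. intros i. apply (inner_zero_eq n x (eq_sym E)). Qed.

Lemma inner_sym n (x y : vec n) : inner x y = inner y x.
Proof. unfold inner; apply sumFin_ext; intros; ring. Qed.

Lemma sumFin_add n (F G : Fin.t n -> R) : sumFin n (fun i => F i + G i) = sumFin n F + sumFin n G.
Proof. induction n; simpl. ring. rewrite IHn. ring. Qed.
Lemma sumFin_scal n c (F : Fin.t n -> R) : sumFin n (fun i => c * F i) = c * sumFin n F.
Proof. induction n; simpl. ring. rewrite IHn. ring. Qed.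

Lemma inner_young n (x y : vec n) c : 0 < c -> 2 * c * inner x y <= inner x x + c^2 * inner y y.
Proof. intros Hc. unfold inner. induction n; simpl. lra.
  specialize (IHn (fun i => x (Fin.FS i)) (fun i => y (Fin.FS i))). simpl in IHn.
  pose proof (pow2_ge_0 (x Fin.F1 - c * y Fin.F1)). nra. Qed.

Lemma norm2_scal n s (d : vec n) : norm2 (vscal s d) = Rabs s * norm2 d.
Proof. unfold norm2. replace (inner (vscal s d) (vscal s d)) with (Rsqr s * inner d d).
  rewrite sqrt_mult. rewrite sqrt_Rsqr_abs. reflexivity. apply Rle_0_sqr. apply inner_nonneg.
  unfold inner, vscal. rewrite <- sumFin_scal. apply sumFin_ext. intros; unfold Rsqr; ring. Qed.

Lemma inner_scal_r n s (x d : vec n) : inner x (vscal s d) = s * inner x d.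
Proof. unfold inner, vscal. rewrite <- sumFin_scal. apply sumFin_ext. intros; ring. Qed.

Lemma phi_deriv n (f : vec n -> R) g y d t : is_gradient f g ->
  derivable_pt_lim (fun t => f (vadd y (vscal t d))) t (inner (g (vadd y (vscal t d))) d).
Proof.
  intros G.
  destruct (inner_nonneg n d) as [Hd|Hd].
  - set (p := vadd y (vscal t d)).
    assert (Hnd : 0 < norm2 d) by (unfold norm2; apply sqrt_lt_R0; auto).
    intros eps He.
    destruct (G p (eps / (2 * norm2 d))) as [del [Hdel Hh]].
    { apply Rdiv_lt_0_compat; lra. }
    assert (Hp : 0 < del / norm2 d) by (apply Rdiv_lt_0_compat; lra).
    exists (mkposreal _ Hp). simpl. intros s Hs Hsd.
    specialize (Hh (vscal s d)). rewrite norm2_scal in Hh.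
    assert (Has : 0 < Rabs s) by (apply Rabs_pos_lt; auto).
    assert (Hlt : Rabs s * norm2 d < del).
    { apply (Rmult_lt_compat_r (norm2 d)) in Hsd; auto.
      unfold Rdiv in Hsd. rewrite Rmult_assoc, Rinv_l in Hsd; lra. }
    assert (Hpos : 0 < Rabs s * norm2 d) by nra.
    specialize (Hh (conj Hpos Hlt)).
    replace (vadd p (vscal s d)) with (vadd y (vscal (t + s) d)) in Hh.
    2:{ apply vec_eq; intros i; unfold p, vadd, vscal; ring. }
    rewrite inner_scal_r in Hh. fold p.
    set (F := f (vadd y (vscal (t + s) d)) - f p) in *.
    replace (F / s - inner (g p) d) with ((F - s * inner (g p) d) / s) by (field; auto).
    unfold Rdiv. rewrite Rabs_mult, Rabs_inv.
    apply (Rmult_lt_reg_r (Rabs s)); auto.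
    rewrite Rmult_assoc, Rinv_l by lra.
    replace (eps / (2 * norm2 d) * (Rabs s * norm2 d)) with (eps / 2 * Rabs s) in Hh by (field; lra).
    nra.
  - assert (E : d = vzero).
    { apply vec_eq; intros i. apply (inner_zero_eq n d (eq_sym Hd)). }
    subst d.
    replace (inner (g (vadd y (vscal t vzero))) vzero) with 0.
    2:{ unfold inner, vzero. generalize (g (vadd y (vscal t (fun _ => 0)))). clear. induction n; simpl; intros v. ring. rewrite <- IHn. ring. }
    replace (fun t0 => f (vadd y (vscal t0 vzero))) with (fun _ : R => f y).
    apply derivable_pt_lim_const.
    apply functional_extensionality; intros u. f_equal. apply vec_eq; intros i; unfold vadd, vscal, vzero; ring.
Qed.

Lemma inner_sub_l n (a b d : vec n) : inner (vsub a b) d = inner a d - inner b d.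
Proof. unfold inner, vsub. replace (sumFin n (fun i => a i * d i) - sumFin n (fun i => b i * d i)) with (sumFin n (fun i => a i * d i) + -1 * sumFin n (fun i => b i * d i)) by ring.
 rewrite <- (sumFin_scal n (-1)), <- sumFin_add. apply sumFin_ext; intros; ring. Qed.

Lemma descent_gen n (f : vec n -> R) g L y d : 0 < L -> L_smooth f g L ->
  f (vadd y d) <= f y + inner (g y) d + L / 2 * inner d d.
Proof.
  intros HL [G Lip].
  set (c1 := inner (g y) d). set (c2 := L / 2 * inner d d).
  set (phi := fun t => f (vadd y (vscal t d))).
  set (psi := (phi - (fct_cte c1 * id) - (fct_cte c2 * (id * id)))%F).
  set (psi' := fun t => inner (g (vadd y (vscal t d))) d - (0 * t + c1 * 1) - (0 * (t * t) + c2 * (1 * t + t * 1))).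
  assert (HD : forall c, derivable_pt_lim psi c (psi' c)).
  { intros c.
    assert (H : exists l, derivable_pt_lim psi c l /\ l = psi' c).
    { eexists; split.
      unfold psi; repeat first [apply (phi_deriv n f g); exact G | apply derivable_pt_lim_minus | apply derivable_pt_lim_mult | apply derivable_pt_lim_const | apply derivable_pt_lim_id | apply phi_deriv; auto].
      unfold psi', fct_cte, id, mult_fct. ring. }
    destruct H as [l [H1 H2]]. subst l. exact H1. }
  destruct (MVT_cor2 psi psi' 0 1 Rlt_0_1 (fun c _ => HD c)) as [c [Hc Hc01]].
  assert (Hneg : psi' c <= 0).
  { unfold psi'. set (p := vadd y (vscal c d)).
    assert (Ha : inner (vsub (g p) (g y)) (vsub (g p) (g y)) <= (L * c) ^ 2 * inner d d).
    { rewrite <- !norm2_sq. specialize (Lip p y).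
      replace (vsub p y) with (vscal c d) in Lip by (apply vec_eq; intros i; unfold p, vsub, vadd, vscal; ring).
      rewrite norm2_scal, Rabs_right in Lip by lra.
      assert (0 <= norm2 (vsub (g p) (g y))) by apply sqrt_pos.
      assert (0 <= norm2 d) by apply sqrt_pos.
      rewrite <- Rpow_mult_distr. simpl. rewrite !Rmult_1_r. nra. }
    pose proof (inner_young n (vsub (g p) (g y)) d (L * c)) as Y.
    rewrite inner_sub_l in Y. pose proof (inner_nonneg n d).
    assert (0 < L * c) by nra. specialize (Y H0).
    unfold c1, c2. nra. }
  unfold psi in Hc. unfold minus_fct, mult_fct, fct_cte, id, phi in Hc.
  replace (vadd y (vscal 1 d)) with (vadd y d) in Hc by (apply vec_eq; intros i; unfold vadd, vscal; ring).
  replace (vadd y (vscal 0 d)) with y in Hc by (apply vec_eq; intros i; unfold vadd, vscal; ring).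
  unfold c2 in *. nra.
Qed.

Lemma descent n (f : vec n -> R) g L y : 0 < L -> L_smooth f g L ->
  f (vsub y (vscal (/ L) (g y))) <= f y - inner (g y) (g y) / (2 * L).
Proof.
  intros HL HS. pose proof (descent_gen n f g L y (vscal (- / L) (g y)) HL HS) as D.
  replace (vadd y (vscal (- / L) (g y))) with (vsub y (vscal (/ L) (g y))) in D
    by (apply vec_eq; intros i; unfold vadd, vsub, vscal; ring).
  rewrite !inner_scal_r in D. rewrite (inner_sym _ (vscal _ _)), !inner_scal_r in D.
  replace (f y - inner (g y) (g y) / (2 * L)) with
    (f y + - / L * inner (g y) (g y) + L / 2 * (- / L * (- / L * inner (g y) (g y)))) by (field; lra).
  exact D.
Qed.

Lemma deriv_min_right (phi : R -> R) t l d0 : 0 < d0 -> derivable_pt_lim phi t l ->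
  (forall s, 0 < s < d0 -> phi t <= phi (t + s)) -> 0 <= l.
Proof.
  intros Hd0 D Hm. destruct (Rle_or_lt 0 l) as [|Hl]; auto. exfalso.
  destruct (D (- l / 2)) as [del Hdel]. lra.
  set (s := Rmin (del / 2) (d0 / 2)).
  assert (Hs : 0 < s) by (unfold s; apply Rmin_glb_lt; destruct del; simpl; lra).
  assert (Hs1 : s < del) by (unfold s; eapply Rle_lt_trans; [apply Rmin_l|]; destruct del; simpl; lra).
  assert (Hs2 : s < d0) by (unfold s; eapply Rle_lt_trans; [apply Rmin_r|]; lra).
  specialize (Hdel s (Rgt_not_eq _ _ Hs)). rewrite Rabs_right in Hdel by lra.
  specialize (Hdel Hs1). specialize (Hm s (conj Hs Hs2)).
  apply Rabs_def2 in Hdel. destruct Hdel as [H1 H2].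
  assert (0 <= (phi (t + s) - phi t) / s) by (unfold Rdiv; apply Rmult_le_pos; [lra | left; apply Rinv_0_lt_compat; lra]). lra.
Qed.

Lemma deriv_min_left (phi : R -> R) t l d0 : 0 < d0 -> derivable_pt_lim phi t l ->
  (forall s, 0 < s < d0 -> phi t <= phi (t - s)) -> l <= 0.
Proof.
  intros Hd0 D Hm. destruct (Rle_or_lt l 0) as [|Hl]; auto. exfalso.
  destruct (D (l / 2)) as [del Hdel]. lra.
  set (s := Rmin (del / 2) (d0 / 2)).
  assert (Hs : 0 < s) by (unfold s; apply Rmin_glb_lt; destruct del; simpl; lra).
  assert (Hs1 : s < del) by (unfold s; eapply Rle_lt_trans; [apply Rmin_l|]; destruct del; simpl; lra).
  assert (Hs2 : s < d0) by (unfold s; eapply Rle_lt_trans; [apply Rmin_r|]; lra).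
  specialize (Hdel (- s) ltac:(lra)). rewrite Rabs_left in Hdel by lra.
  specialize (Hdel ltac:(lra)). specialize (Hm s (conj Hs Hs2)).
  apply Rabs_def2 in Hdel. destruct Hdel as [H1 H2].
  replace (t + - s) with (t - s) in * by ring.
  assert (0 <= (phi (t - s) - phi t) / s) by (unfold Rdiv; apply Rmult_le_pos; [lra | left; apply Rinv_0_lt_compat; lra]).
  replace ((phi (t - s) - phi t) / - s) with (- ((phi (t - s) - phi t) / s)) in * by (field; lra).
  lra.
Qed.

Lemma linesearch n (f : vec n -> R) g x v y beta : is_gradient f g ->
  0 <= beta <= 1 ->
  (forall b, 0 <= b <= 1 -> f (vadd v (vscal beta (vsub x v))) <= f (vadd v (vscal b (vsub x v)))) ->
  y = vadd v (vscal beta (vsub x v)) ->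
  0 <= inner (g y) (vsub x y) /\ 0 <= inner (g y) (vsub v y).
Proof.
  intros G Hb Hm Hy.
  set (d := vsub x v).
  pose proof (phi_deriv n f g v d beta G) as D. replace (vadd v (vscal beta d)) with y in D by (rewrite Hy; reflexivity).
  replace (vsub x y) with (vscal (1 - beta) d) by (apply vec_eq; intros i; rewrite Hy; unfold d, vsub, vadd, vscal; ring).
  replace (vsub v y) with (vscal (- beta) d) by (apply vec_eq; intros i; rewrite Hy; unfold d, vsub, vadd, vscal; ring).
  rewrite !inner_scal_r. split.
  - destruct (Req_dec beta 1) as [E|E]. rewrite E. lra.
    assert (0 <= inner (g y) d).
    { apply (deriv_min_right (fun t => f (vadd v (vscal t d))) beta _ (1 - beta)); auto. lra. intros s Hs. apply Hm. lra. }
    nra.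
  - destruct (Req_dec beta 0) as [E|E]. rewrite E. lra.
    assert (inner (g y) d <= 0).
    { apply (deriv_min_left (fun t => f (vadd v (vscal t d))) beta _ beta); auto. lra. intros s Hs. apply Hm. lra. }
    nra.
Qed.

Definition Quad n t (phi : vec n -> R) := exists l c, forall z, phi z = t / 2 * inner z z + inner l z + c.

Lemma id_I1 n : forall z v : vec n, inner z z = inner v v + 2 * inner v (vsub z v) + inner (vsub z v) (vsub z v).
Proof. unfold inner, vsub. induction n as [|n IH]; intros; simpl. ring.
  specialize (IH (fun i => z (Fin.FS i)) (fun i => v (Fin.FS i))). simpl in IH. lra. Qed.
Lemma id_I2 n : forall l z v : vec n, inner l z = inner l v + inner l (vsub z v).
Proof. unfold inner, vsub. induction n as [|n IH]; intros; simpl. ring.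
  specialize (IH (fun i => l (Fin.FS i)) (fun i => z (Fin.FS i)) (fun i => v (Fin.FS i))). simpl in IH. lra. Qed.
Lemma id_I3 s n : forall v e : vec n, inner (vadd v (vscal s e)) (vadd v (vscal s e)) = inner v v + 2 * s * inner v e + s^2 * inner e e.
Proof. unfold inner, vadd, vscal. induction n as [|n IH]; intros; simpl. ring.
  specialize (IH (fun i => v (Fin.FS i)) (fun i => e (Fin.FS i))). simpl in IH. lra. Qed.
Lemma id_I4 s n : forall l v e : vec n, inner l (vadd v (vscal s e)) = inner l v + s * inner l e.
Proof. unfold inner, vadd, vscal. induction n as [|n IH]; intros; simpl. ring.
  specialize (IH (fun i => l (Fin.FS i)) (fun i => v (Fin.FS i)) (fun i => e (Fin.FS i))). simpl in IH. lra. Qed.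

Lemma quad_min n t (phi : vec n -> R) v : 0 <= t -> Quad n t phi -> (forall z, phi v <= phi z) ->
  forall z, phi z = phi v + t / 2 * inner (vsub z v) (vsub z v).
Proof.
  intros Ht [l [c Hq]] Hm z.
  set (e := vsub z v). set (E := inner e e). set (b := t * inner v e + inner l e).
  assert (HE : 0 <= E) by apply inner_nonneg.
  assert (Hb : b = 0).
  { set (a := t / 2 * E).
    assert (Ha : 0 <= a) by (unfold a; nra).
    set (s := - b / (a + 1)).
    specialize (Hm (vadd v (vscal s e))). rewrite !Hq, id_I3, id_I4 in Hm.
    assert (H0 : 0 <= a * s ^ 2 + b * s) by (unfold a, b, E; lra).
    assert (Hs : a * s ^ 2 + b * s = - (b ^ 2) / ((a + 1) ^ 2)).
    { unfold s. assert (a + 1 <> 0) by lra. clearbody a b. field. auto. }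
    rewrite Hs in H0.
    assert (0 <= - b ^ 2) .
    { apply (Rmult_le_reg_r (/ ((a + 1) ^ 2))). apply Rinv_0_lt_compat; nra. rewrite Rmult_0_l. exact H0. }
    nra. }
  rewrite !Hq. rewrite (id_I1 n z v), (id_I2 n l z v). fold e. unfold b in Hb. unfold E in *. lra.
Qed.

Lemma id_add c n : forall l1 l2 z : vec n, inner (vadd l1 (vscal c l2)) z = inner l1 z + c * inner l2 z.
Proof. unfold inner, vadd, vscal. induction n as [|n IH]; intros; simpl. ring.
  specialize (IH (fun i => l1 (Fin.FS i)) (fun i => l2 (Fin.FS i)) (fun i => z (Fin.FS i))). simpl in IH. lra. Qed.

Lemma quad_add n t1 t2 c (phi chi : vec n -> R) : Quad n t1 phi -> Quad n t2 chi ->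
  Quad n (t1 + c * t2) (fun z => phi z + c * chi z).
Proof. intros [l1 [c1 H1]] [l2 [c2 H2]]. exists (vadd l1 (vscal c l2)), (c1 + c * c2).
  intros z. cbv beta. rewrite H1, H2, id_add. lra. Qed.

Lemma id_p0 n : forall z x0 : vec n, inner (vsub z x0) (vsub z x0) = inner z z + 2 * inner (vscal (-1) x0) z + inner x0 x0.
Proof. unfold inner, vsub, vscal. induction n as [|n IH]; intros; simpl. ring.
  specialize (IH (fun i => z (Fin.FS i)) (fun i => x0 (Fin.FS i))). simpl in IH. lra. Qed.

Lemma id_model mu n : forall gy z y : vec n, inner gy (vsub z y) + mu / 2 * inner (vsub z y) (vsub z y) =
  mu / 2 * inner z z + inner (vsub gy (vscal mu y)) z - inner gy y + mu / 2 * inner y y.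
Proof. unfold inner, vsub, vscal. induction n as [|n IH]; intros; simpl. ring.
  specialize (IH (fun i => gy (Fin.FS i)) (fun i => z (Fin.FS i)) (fun i => y (Fin.FS i))). simpl in IH. lra. Qed.

Lemma quad_psi n f g mu x0 y a tau : tau 0%nat = 1 -> (forall k, tau (S k) = tau k + mu * a (S k)) ->
  forall k, Quad n (tau k) (psi f g mu x0 y a k).
Proof.
  intros T0 TS k. induction k as [|k IH].
  - rewrite T0. exists (vscal (-1) x0), (/ 2 * inner x0 x0). intros z. change (psi f g mu x0 y a 0 z) with (/2 * norm2 (vsub z x0) ^ 2).
    rewrite norm2_sq, id_p0. lra.
  - rewrite TS. replace (tau k + mu * a (S k)) with (tau k + a (S k) * mu) by ring. change (psi f g mu x0 y a (S k)) with (fun z => psi f g mu x0 y a k z +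
           a (S k) * (f (y k) + inner (g (y k)) (vsub z (y k))
                      + mu / 2 * (norm2 (vsub z (y k))) ^ 2)). apply quad_add; auto.
    exists (vsub (g (y k)) (vscal mu (y k))), (f (y k) - inner (g (y k)) (y k) + mu / 2 * inner (y k) (y k)).
    intros z. rewrite norm2_sq. pose proof (id_model mu n (g (y k)) z (y k)). lra.
Qed.

Lemma id_cs t a mu n : forall z vk yk gk : vec n,
  (t + a * mu) * (t / 2 * inner (vsub z vk) (vsub z vk) + a * inner gk (vsub z yk)
                  + a * mu / 2 * inner (vsub z yk) (vsub z yk))
  - (t * mu * a / 2 * inner (vsub vk yk) (vsub vk yk) + t * a * inner gk (vsub vk yk) - a ^ 2 / 2 * inner gk gk)
  = / 2 * inner (fun i => (t + a * mu) * (z i - yk i) - t * (vk i - yk i) + a * gk i)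
                (fun i => (t + a * mu) * (z i - yk i) - t * (vk i - yk i) + a * gk i).
Proof. unfold inner, vsub. induction n as [|n IH]; intros; simpl. ring.
  specialize (IH (fun i => z (Fin.FS i)) (fun i => vk (Fin.FS i)) (fun i => yk (Fin.FS i)) (fun i => gk (Fin.FS i))). simpl in IH. lra. Qed.

Lemma cs_bound t a mu n (z vk yk gk : vec n) : 0 < t + a * mu ->
  t / 2 * inner (vsub z vk) (vsub z vk) + a * inner gk (vsub z yk) + a * mu / 2 * inner (vsub z yk) (vsub z yk)
  >= (t * mu * a / 2 * inner (vsub vk yk) (vsub vk yk) + t * a * inner gk (vsub vk yk) - a ^ 2 / 2 * inner gk gk) / (t + a * mu).
Proof.
  intros Hp. pose proof (id_cs t a mu n z vk yk gk) as E.
  pose proof (inner_nonneg n (fun i => (t + a * mu) * (z i - yk i) - t * (vk i - yk i) + a * gk i)).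
  apply Rle_ge. apply (Rmult_le_reg_l (t + a * mu)); auto.
  replace ((t + a * mu) * ((t * mu * a / 2 * inner (vsub vk yk) (vsub vk yk) + t * a * inner gk (vsub vk yk) - a ^ 2 / 2 * inner gk gk) / (t + a * mu)))
    with (t * mu * a / 2 * inner (vsub vk yk) (vsub vk yk) + t * a * inner gk (vsub vk yk) - a ^ 2 / 2 * inner gk gk) by (field; lra).
  lra.
Qed.

Lemma inner_scal_scal n s (u : vec n) : inner (vscal s u) (vscal s u) = s ^ 2 * inner u u.
Proof. rewrite inner_scal_r, inner_sym, inner_scal_r. ring. Qed.

Lemma sc_lower n (gy u : vec n) mu : 0 < mu -> inner gy u + mu / 2 * inner u u >= - inner gy gy / (2 * mu).
Proof. intros Hm. pose proof (inner_young n gy (vscal (-1) u) mu Hm) as Y.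
  rewrite inner_scal_r, inner_scal_scal in Y.
  apply Rle_ge. apply (Rmult_le_reg_l (2 * mu)). lra.
  replace (2 * mu * (- inner gy gy / (2 * mu))) with (- inner gy gy) by (field; lra). nra. Qed.

Definition Setting n (f : vec n -> R) g L mu (xs x0 : vec n) opt x v y (beta h a A tau : nat -> R) :=
  0 < mu /\ mu < L /\ L_smooth f g L /\ strongly_convex f g mu /\ (forall z, f xs <= f z) /\
  AGMsDR_SC_run opt f g L mu x0 x v y beta h a A tau /\ (forall k, g (y k) <> vzero).

Ltac dS HS := destruct HS as (Hmu & HmuL & HLs & Hsc & Hxs & (HA0 & Ht0 & Hx0 & Hv0 & Hrun) & Hg).

Lemma inner_zero_l n (x : vec n) : inner vzero x = 0.
Proof. unfold inner, vzero. induction n; simpl. ring. rewrite (IHn (fun i => x (Fin.FS i))). ring. Qed.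

Lemma E_form n f g L mu xs x0 opt x v y beta h a A tau :
  Setting n f g L mu xs x0 opt x v y beta h a A tau ->
  forall k, 0 <= tau k -> forall z, psi f g mu x0 y a k z = psi f g mu x0 y a k (v k) + tau k / 2 * inner (vsub z (v k)) (vsub z (v k)).
Proof.
  intros HS k Ht z. dS HS. destruct k as [|k].
  - rewrite Hv0, Ht0. change (psi f g mu x0 y a 0 z) with (/2 * norm2 (vsub z x0) ^ 2).
    change (psi f g mu x0 y a 0 x0) with (/2 * norm2 (vsub x0 x0) ^ 2).
    rewrite !norm2_sq. replace (vsub x0 x0) with (@vzero n) by (apply vec_eq; intros i; unfold vsub, vzero; ring).
    rewrite inner_zero_l. lra.
  - apply quad_min; auto.
    + apply quad_psi; auto. intros j. destruct (Hrun j) as (_ & _ & _ & T & _). exact T.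
    + intros w. destruct (Hrun k) as (_ & _ & _ & _ & M). apply M.
Qed.

Lemma ls n f g L mu xs x0 opt x v y beta h a A tau :
  Setting n f g L mu xs x0 opt x v y beta h a A tau -> forall k,
  0 <= inner (g (y k)) (vsub (x k) (y k)) /\ 0 <= inner (g (y k)) (vsub (v k) (y k)).
Proof.
  intros HS k. dS HS. destruct (Hrun k) as ((B1 & B2 & B3) & _).
  eapply linesearch; eauto. destruct HLs; auto.
Qed.

Lemma fx_gt n f g L mu xs x0 opt x v y beta h a A tau :
  Setting n f g L mu xs x0 opt x v y beta h a A tau -> forall k, f xs < f (x (S k)).
Proof.
  intros HS k. dS HS. destruct (Hrun (S k)) as ((B1 & B2 & B3) & _).
  specialize (B2 1 ltac:(lra)).
  replace (vadd (v (S k)) (vscal 1 (vsub (x (S k)) (v (S k))))) with (x (S k)) in B2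
    by (apply vec_eq; intros i; unfold vadd, vscal, vsub; ring).
  rewrite <- B3 in B2.
  pose proof (descent n f g L (y (S k)) ltac:(lra) HLs) as D.
  pose proof (inner_pos n _ (Hg (S k))).
  assert (0 < inner (g (y (S k))) (g (y (S k)))/ (2 * L)) by (apply Rdiv_lt_0_compat; lra).
  specialize (Hxs (vsub (y (S k)) (vscal (/ L) (g (y (S k)))))). lra.
Qed.

Lemma key n f g L mu xs x0 opt x v y beta h a A tau :
  Setting n f g L mu xs x0 opt x v y beta h a A tau -> forall k, 0 <= A k -> tau k = 1 + mu * A k ->
  (0 < a (S k) /\ (tau k + mu * a (S k)) * (A k + a (S k)) <= L * a (S k) ^ 2) /\
  f (x (S k)) <= f (y k) - a (S k) ^ 2 * (norm2 (g (y k))) ^ 2 / (2 * (tau k + mu * a (S k)) * (A k + a (S k)))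
      + mu * tau k * a (S k) * (norm2 (vsub (v k) (y k))) ^ 2 / (2 * (tau k + mu * a (S k)) * (A k + a (S k))).
Proof.
  intros HS k HA Ht. pose proof (fx_gt _ _ _ _ _ _ _ _ _ _ _ _ _ _ _ _ HS k) as Hgt.
  dS HS. destruct (Hrun k) as (_ & S2 & _ & _ & _).
  assert (HL : 0 < L) by lra.
  pose proof (descent n f g L (y k) HL HLs) as Desc.
  pose proof (inner_pos n _ (Hg k)) as HG.
  rewrite !norm2_sq.
  set (G := inner (g (y k)) (g (y k))) in *.
  set (W := inner (vsub (v k) (y k)) (vsub (v k) (y k))).
  assert (HW : 0 <= W) by apply inner_nonneg.
  set (t := tau k) in *. set (A0 := A k) in *.
  destruct opt.
  - destruct S2 as (Hx & Ha & Heq).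
    set (al := a (S k)) in *.
    assert (Htp : 0 < t) by nra. assert (HD : 0 < (t + mu * al) * (A0 + al)) by (apply Rmult_lt_0_compat; nra).
    assert (E : (t + mu * al) * (A0 + al) = L * al ^ 2).
    { assert (E1 : al ^ 2 = (t + mu * al) * (A0 + al) * / L).
      { rewrite <- Heq. field. repeat split; nra. }
      rewrite E1. field. repeat split; nra. }
    split. split; lra.
    rewrite Hx. fold G.
    replace (2 * (t + mu * al) * (A0 + al)) with (2 * (L * al ^ 2)) by (rewrite <- E; ring).
    assert (0 <= mu * t * al * W / (2 * (L * al ^ 2))).
    { apply Rmult_le_pos. { assert (0 <= mu * t * al) by (repeat apply Rmult_le_pos; lra). nra. }
      left; apply Rinv_0_lt_compat; nra. }
    replace (al ^ 2 * G / (2 * (L * al ^ 2))) with (G / (2 * L)) by (field; split; lra).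
    lra.
  - cbv zeta in S2. destruct S2 as (Hh & Hhm & Hx & Heqn & Hmax).
    rewrite !norm2_sq in Heqn, Hmax. fold G W in Heqn, Hmax.
    set (ng := norm2 (g (y k))) in *.
    assert (Hng : 0 < ng) by (unfold ng, norm2; apply sqrt_lt_R0; exact HG).
    assert (HDesc : f (x (S k)) <= f (y k) - G / (2 * L)).
    { rewrite Hx. eapply Rle_trans. apply (Hhm (ng / L)). left; apply Rdiv_lt_0_compat; lra.
      replace (vsub (y k) (vscal (ng / L) (vscal (/ ng) (g (y k))))) with (vsub (y k) (vscal (/ L) (g (y k)))). exact Desc.
      apply vec_eq; intros i; unfold vsub, vscal; field; lra. }
    assert (HSC : f (y k) - G / (2 * mu) <= f xs).
    { specialize (Hsc (y k) xs). rewrite norm2_sq in Hsc.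
      pose proof (sc_lower n (g (y k)) (vsub xs (y k)) mu Hmu) as SL. fold G in SL.
      unfold Rdiv in *. lra. }
    set (D0 := f (y k) - f (x (S k))).
    assert (HGL : G <= 2 * L * D0).
    { assert (H1 : G / (2 * L) <= D0) by (unfold D0; lra).
      apply (Rmult_le_compat_l (2 * L)) in H1; [|lra]. replace (2 * L * (G / (2 * L))) with G in H1 by (field; lra). lra. }
    assert (HD0M : 2 * mu * D0 < G).
    { assert (H1 : D0 < G / (2 * mu)) by (unfold D0; lra).
      apply (Rmult_lt_compat_l (2 * mu)) in H1; [|lra]. replace (2 * mu * (G / (2 * mu))) with G in H1 by (field; lra). lra. }
    assert (Htp : 0 < t) by nra.
    set (P := fun al => 2 * (t + mu * al) * (A0 + al) * D0 - al ^ 2 * G + mu * t * al * W).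
    set (d0 := L - mu). set (b0 := t + mu * A0). set (c0 := t * A0).
    assert (Hd0 : 0 < d0) by (unfold d0; lra).
    assert (Hb0 : 0 < b0) by (unfold b0; nra).
    assert (Hc0 : 0 <= c0) by (unfold c0; nra).
    set (r := sqrt (b0 ^ 2 + 4 * d0 * c0)).
    assert (Hr2 : r * r = b0 ^ 2 + 4 * d0 * c0). { unfold r. apply sqrt_sqrt. nra. }
    assert (Hr0 : 0 <= r) by apply sqrt_pos.
    assert (Hrb : b0 <= r) by nra.
    set (s := (b0 + r) / (2 * d0)).
    assert (Hs2 : 2 * d0 * s = b0 + r) by (unfold s; field; lra).
    assert (Hs0 : 0 < s) by nra.
    assert (Hroot : d0 * s ^ 2 - b0 * s - c0 = 0).
    { assert (E : 4 * d0 * (d0 * s ^ 2 - b0 * s - c0) = (2 * d0 * s) ^ 2 - 2 * b0 * (2 * d0 * s) - 4 * d0 * c0) by ring.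
      rewrite Hs2 in E. assert (4 * d0 * (d0 * s ^ 2 - b0 * s - c0) = 0) by nra. nra. }
    assert (Qmono : forall w, s <= w -> (t + mu * w) * (A0 + w) <= L * w ^ 2).
    { intros w Hw. assert (Hdb : b0 <= d0 * s) by nra.
      assert (0 <= (w - s) * (d0 * (w + s) - b0)) by (apply Rmult_le_pos; nra).
      assert (E : L * w ^ 2 - (t + mu * w) * (A0 + w) = (w - s) * (d0 * (w + s) - b0) + (d0 * s ^ 2 - b0 * s - c0))
        by (unfold d0, b0, c0; ring).
      lra. }
    assert (HPs : 0 <= P s).
    { assert (E : (t + mu * s) * (A0 + s) = L * s ^ 2).
      { assert (E : L * s ^ 2 - (t + mu * s) * (A0 + s) = d0 * s ^ 2 - b0 * s - c0) by (unfold d0, b0, c0; ring). lra. }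
      unfold P. replace (2 * (t + mu * s) * (A0 + s) * D0) with (2 * ((t + mu * s) * (A0 + s)) * D0) by ring.
      rewrite E. assert (0 <= mu * t * s * W) by (apply Rmult_le_pos; [apply Rmult_le_pos; [apply Rmult_le_pos|]|]; lra).
      assert (0 <= s ^ 2) by nra. nra. }
    set (c2 := 2 * mu * D0 - G). set (c1 := 2 * b0 * D0 + mu * t * W). set (cc := 2 * c0 * D0).
    assert (HP : forall al, P al = c2 * al ^ 2 + c1 * al + cc) by (intros; unfold P, c2, c1, cc, b0, c0; ring).
    assert (Hc2 : c2 < 0) by (unfold c2; lra).
    set (M := s + 1 + (Rabs c1 + Rabs cc) / (- c2)).
    pose proof (Rle_abs c1). pose proof (Rle_abs cc). pose proof (Rabs_pos c1). pose proof (Rabs_pos cc).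
    assert (Hq : 0 <= (Rabs c1 + Rabs cc) / (- c2)) by (apply Rmult_le_pos; [lra | left; apply Rinv_0_lt_compat; lra]).
    assert (HsM : s < M) by (unfold M; lra).
    assert (HM : P M < 0).
    { assert (E : c2 * M + Rabs c1 + Rabs cc = c2 * (s + 1)) by (unfold M; field; lra).
      assert (HM1 : 1 <= M) by (unfold M; lra).
      rewrite HP. assert (c1 * M <= Rabs c1 * M) by nra. assert (cc <= Rabs cc * M) by nra.
      assert (M * (c2 * (s + 1)) < 0) by nra. nra. }
    assert (Hz : exists z, s <= z /\ P z = 0).
    { destruct (Req_dec (P s) 0) as [E|E]. exists s; split; [lra|auto].
      destruct (IVT (fun al => - P al) s M) as [z [Hz1 Hz2]].
      unfold P; reg. exact HsM. lra. lra.
      exists z. split; lra. }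
    destruct Hz as [z [Hsz Hz]].
    assert (Hza : z <= a (S k)).
    { apply Hmax. assert (HDz : 0 < (t + mu * z) * (A0 + z)) by (apply Rmult_lt_0_compat; nra).
      split. lra.
      assert (E : z ^ 2 * G / (2 * (t + mu * z) * (A0 + z)) - mu * t * z * W / (2 * (t + mu * z) * (A0 + z)) = D0).
      { replace (z ^ 2 * G / (2 * (t + mu * z) * (A0 + z)) - mu * t * z * W / (2 * (t + mu * z) * (A0 + z)))
          with ((z ^ 2 * G - mu * t * z * W) / (2 * ((t + mu * z) * (A0 + z)))) by (field; split; nra).
        replace (z ^ 2 * G - mu * t * z * W) with (2 * ((t + mu * z) * (A0 + z)) * D0) by (unfold P in Hz; lra).
        field. repeat split; nra. }
      unfold D0 in E. lra. }
    split. split. lra. apply Qmono. lra.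
    destruct Heqn as [_ Heqn]. lra.
Qed.

Definition Inv n (f : vec n -> R) g mu (xs x0 : vec n) x v y (a A tau : nat -> R) k :=
  0 <= A k /\ tau k = 1 + mu * A k /\ A k * f (x k) <= psi f g mu x0 y a k (v k) /\
  psi f g mu x0 y a k xs <= A k * f xs + / 2 * inner (vsub xs x0) (vsub xs x0).

Lemma Inv0 n f g L mu xs x0 opt x v y beta h a A tau :
  Setting n f g L mu xs x0 opt x v y beta h a A tau -> Inv n f g mu xs x0 x v y a A tau 0.
Proof.
  intros HS. dS HS. unfold Inv. rewrite HA0, Ht0, Hv0.
  change (psi f g mu x0 y a 0 x0) with (/2 * norm2 (vsub x0 x0) ^ 2).
  change (psi f g mu x0 y a 0 xs) with (/2 * norm2 (vsub xs x0) ^ 2).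
  rewrite !norm2_sq. pose proof (inner_nonneg n (vsub x0 x0)). lra.
Qed.

Lemma Inv_step n f g L mu xs x0 opt x v y beta h a A tau :
  Setting n f g L mu xs x0 opt x v y beta h a A tau -> forall k,
  Inv n f g mu xs x0 x v y a A tau k -> Inv n f g mu xs x0 x v y a A tau (S k).
Proof.
  intros HS k (HA & Ht & Hlo & Hup).
  pose proof (key _ _ _ _ _ _ _ _ _ _ _ _ _ _ _ _ HS k HA Ht) as ((Ha & Hgrow) & Hkey).
  pose proof (E_form _ _ _ _ _ _ _ _ _ _ _ _ _ _ _ _ HS k ltac:(destruct HS as (Hmu & _); nra)) as EF.
  pose proof (ls _ _ _ _ _ _ _ _ _ _ _ _ _ _ _ _ HS k) as [L1 L2].
  dS HS. destruct (Hrun k) as (_ & _ & HAS & HtS & _).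
  unfold Inv. rewrite HAS, HtS.
  cbn [psi]. rewrite !norm2_sq in *.
  set (al := a (S k)) in *. set (t := tau k) in *. set (A0 := A k) in *.
  assert (Htp : 0 < t) by nra.
  split. lra. split. lra. split.
  - rewrite (EF (v (S k))).
    set (z := v (S k)).
    pose proof (cs_bound t al mu n z (v k) (y k) (g (y k)) ltac:(nra)) as CS.
    specialize (Hsc (y k) (x k)). rewrite norm2_sq in Hsc.
    pose proof (inner_nonneg n (vsub (x k) (y k))).
    set (G := inner (g (y k)) (g (y k))) in *.
    set (W := inner (vsub (v k) (y k)) (vsub (v k) (y k))) in *.
    assert (Hfy : A0 * f (y k) <= A0 * f (x k)).
    { apply Rmult_le_compat_l; auto. assert (0 <= mu / 2 * inner (vsub (x k) (y k)) (vsub (x k) (y k))) by (apply Rmult_le_pos; lra). lra. }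
    assert (HX : (A0 + al) * (- (al ^ 2 * G / (2 * (t + mu * al) * (A0 + al))) + mu * t * al * W / (2 * (t + mu * al) * (A0 + al)))
               = (t * mu * al / 2 * W - al ^ 2 / 2 * G) / (t + al * mu)).
    { field. repeat split; nra. }
    assert (HK : (A0 + al) * f (x (S k)) <= (A0 + al) * f (y k) + (t * mu * al / 2 * W - al ^ 2 / 2 * G) / (t + al * mu)).
    { rewrite <- HX. rewrite <- Rmult_plus_distr_l. apply Rmult_le_compat_l. lra. lra. }
    assert (HT : (t * mu * al / 2 * W + t * al * inner (g (y k)) (vsub (v k) (y k)) - al ^ 2 / 2 * G) / (t + al * mu)
                 >= (t * mu * al / 2 * W - al ^ 2 / 2 * G) / (t + al * mu)).
    { apply Rle_ge. unfold Rdiv. apply Rmult_le_compat_r. left; apply Rinv_0_lt_compat; nra.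
      assert (0 <= t * al * inner (g (y k)) (vsub (v k) (y k))) by (apply Rmult_le_pos; nra). lra. }
    assert (Hm : t / 2 * inner (vsub z (v k)) (vsub z (v k)) + al * (f (y k) + inner (g (y k)) (vsub z (y k)) + mu / 2 * inner (vsub z (y k)) (vsub z (y k)))
       = al * f (y k) + (t / 2 * inner (vsub z (v k)) (vsub z (v k)) + al * inner (g (y k)) (vsub z (y k)) + al * mu / 2 * inner (vsub z (y k)) (vsub z (y k)))) by lra.
    lra.
  - specialize (Hsc (y k) xs). rewrite norm2_sq in Hsc.
    assert (al * (f (y k) + inner (g (y k)) (vsub xs (y k)) + mu / 2 * inner (vsub xs (y k)) (vsub xs (y k))) <= al * f xs)
      by (apply Rmult_le_compat_l; lra).
    lra.
Qed.

Lemma sqrt_growth A' A L a : 0 < L -> 0 <= A -> A' = A + a -> 0 < a -> A' <= L * a ^ 2 ->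
  sqrt A + / (2 * sqrt L) <= sqrt A'.
Proof.
  intros HL HA HA' Ha Hg.
  pose proof (sqrt_sqrt A HA) as Hq. pose proof (sqrt_sqrt A' ltac:(lra)) as Hp.
  pose proof (sqrt_sqrt L ltac:(lra)) as Hl.
  pose proof (sqrt_lt_R0 L HL) as Hsl. pose proof (sqrt_lt_R0 A' ltac:(lra)) as Hpp.
  pose proof (sqrt_pos A) as Hq0.
  set (p := sqrt A') in *. set (q := sqrt A) in *. set (sl := sqrt L) in *.
  assert (Hqp : q <= p) by nra.
  assert (Ha2 : a = p * p - q * q) by lra.
  assert (H1 : p * p <= (sl * (p * p - q * q)) * (sl * (p * p - q * q))) by (rewrite <- Ha2; nra).
  assert (H2 : 0 <= sl * (p * p - q * q)) by nra.
  assert (H3 : p <= sl * (p * p - q * q)) by nra.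
  assert (H4 : 1 <= 2 * sl * (p - q)) by nra.
  assert (/ (2 * sl) <= p - q).
  { apply (Rmult_le_reg_l (2 * sl)). lra. rewrite Rinv_r by lra. lra. }
  lra.
Qed.

Lemma id_swap n : forall x0 xs : vec n, inner (vsub x0 xs) (vsub x0 xs) = inner (vsub xs x0) (vsub xs x0).
Proof. unfold inner, vsub. induction n as [|n IH]; intros; simpl. ring.
  specialize (IH (fun i => x0 (Fin.FS i)) (fun i => xs (Fin.FS i))). simpl in IH. lra. Qed.

Theorem main_proof (n : nat) (f : vec n -> R) (g : vec n -> vec n) (L mu : R)
  (xs x0 : vec n) (opt : agm_option)
  (x v y : nat -> vec n) (beta h a A tau : nat -> R) :
  0 < mu -> mu < L ->
  L_smooth f g L ->
  strongly_convex f g mu ->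
  (forall z, f xs <= f z) ->
  AGMsDR_SC_run opt f g L mu x0 x v y beta h a A tau ->
  (forall k, g (y k) <> vzero) ->
  forall k : nat, (1 <= k)%nat ->
    f (x k) - f xs <=
    Rmin (2 * L * (norm2 (vsub x0 xs)) ^ 2 / (INR k) ^ 2)
         ((1 - sqrt (mu / L)) ^ (k - 1) * L * (norm2 (vsub x0 xs)) ^ 2).
Proof.
  intros Hmu HmuL HLs Hsc Hxs Hrun Hg.
  assert (HS : Setting n f g L mu xs x0 opt x v y beta h a A tau) by exact (conj Hmu (conj HmuL (conj HLs (conj Hsc (conj Hxs (conj Hrun Hg)))))) .
  assert (HL : 0 < L) by lra.
  assert (HInv : forall k, Inv n f g mu xs x0 x v y a A tau k).
  { induction k. apply (Inv0 _ _ _ L _ _ _ opt _ _ _ beta h); auto. apply (Inv_step _ _ _ L _ _ _ opt _ _ _ beta h); auto. }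
  assert (HGrow : forall k, 0 < a (S k) /\ A (S k) = A k + a (S k) /\ tau (S k) * A (S k) <= L * a (S k) ^ 2).
  { intros k. destruct (HInv k) as (HA & Ht & _).
    destruct (key _ _ _ _ _ _ _ _ _ _ _ _ _ _ _ _ HS k HA Ht) as ((Ha & Hgr) & _).
    destruct Hrun as (_ & _ & _ & _ & R). destruct (R k) as (_ & _ & HAS & HtS & _).
    rewrite HtS, HAS. auto. }
  set (R2 := inner (vsub xs x0) (vsub xs x0)).
  assert (HR2 : 0 <= R2) by apply inner_nonneg.
  assert (HE : forall k, A k * (f (x k) - f xs) <= / 2 * R2).
  { intros k. destruct (HInv k) as (HA & Ht & Hlo & Hup).
    pose proof (E_form _ _ _ _ _ _ _ _ _ _ _ _ _ _ _ _ HS k ltac:(nra) xs) as EF.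
    pose proof (inner_nonneg n (vsub xs (v k))).
    assert (0 <= tau k / 2 * inner (vsub xs (v k)) (vsub xs (v k))) by (apply Rmult_le_pos; nra).
    unfold R2. lra. }
  assert (HA1 : forall k, 0 <= A k /\ tau k = 1 + mu * A k) by (intros k; destruct (HInv k) as (? & ? & _); auto).
  assert (Hr1 : forall k, INR k / (2 * sqrt L) <= sqrt (A k)).
  { induction k.
    - simpl. destruct Hrun as (HA0 & _). rewrite HA0, sqrt_0. unfold Rdiv. lra.
    - destruct (HGrow k) as (Ha & HAS & Hg2). destruct (HA1 k) as [HA _]. destruct (HA1 (S k)) as [HA' Ht'].
      assert (A (S k) <= L * a (S k) ^ 2).
      { rewrite Ht' in Hg2. assert (0 <= mu * A (S k) * A (S k)) by (apply Rmult_le_pos; nra). nra. }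
      pose proof (sqrt_growth (A (S k)) (A k) L (a (S k)) HL HA HAS Ha H).
      rewrite S_INR. assert (0 < sqrt L) by (apply sqrt_lt_R0; lra).
      replace ((INR k + 1) / (2 * sqrt L)) with (INR k / (2 * sqrt L) + / (2 * sqrt L)) by (field; lra). lra. }
  set (q := sqrt (mu / L)).
  assert (Hq : 0 <= q <= 1).
  { split. apply sqrt_pos. unfold q. rewrite <- sqrt_1. apply sqrt_le_1_alt.
    apply (Rmult_le_reg_r L); auto. unfold Rdiv. rewrite Rmult_assoc, Rinv_l by lra. lra. }
  assert (Hr2 : forall k, 1 <= L * A (S k) * (1 - q) ^ k).
  { induction k.
    - destruct (HGrow 0%nat) as (Ha & HAS & Hg2). destruct (HA1 1%nat) as [_ Ht'].
      destruct Hrun as (HA0 & _). rewrite HA0 in HAS. rewrite Ht', HAS in Hg2. rewrite HAS. simpl.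
      rewrite Rplus_0_l in *. nra.
    - destruct (HGrow (S k)) as (Ha & HAS & Hg2). destruct (HA1 (S (S k))) as [HA' Ht'].
      destruct (HA1 (S k)) as [HA _].
      assert (Hmu2 : mu * A (S (S k)) ^ 2 <= L * a (S (S k)) ^ 2).
      { rewrite Ht' in Hg2. nra. }
      assert (Hqa : q * A (S (S k)) <= a (S (S k))).
      { unfold q. rewrite <- (sqrt_pow2 (A (S (S k)))) by lra.
        rewrite <- sqrt_mult by first [apply pow2_ge_0 | apply Rmult_le_pos; [lra | left; apply Rinv_0_lt_compat; lra]].
        rewrite <- (sqrt_pow2 (a (S (S k)))) by lra. apply sqrt_le_1_alt.
        apply (Rmult_le_reg_r L); auto. replace (mu / L * A (S (S k)) ^ 2 * L) with (mu * A (S (S k)) ^ 2) by (field; lra). lra. }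
      assert (HAq : A (S k) <= (1 - q) * A (S (S k))) by lra.
      assert (Hpow : 0 <= (1 - q) ^ k) by (apply pow_le; lra).
      simpl. assert (L * A (S k) * (1 - q) ^ k <= L * ((1 - q) * A (S (S k))) * (1 - q) ^ k).
      { apply Rmult_le_compat_r; auto. apply Rmult_le_compat_l; lra. }
      lra. }
  intros k Hk. destruct k as [|k]. lia.
  replace (S k - 1)%nat with k by lia.
  rewrite norm2_sq, id_swap. fold R2.
  specialize (HE (S k)). specialize (Hxs (x (S k))).
  assert (HAp : 0 < A (S k)).
  { destruct (HGrow k) as (Ha & HAS & _). destruct (HA1 k). lra. }
  apply Rmin_glb.
  - specialize (Hr1 (S k)).
    assert (HkP : 0 < INR (S k)) by (apply lt_0_INR; lia).
    assert (0 < sqrt L) by (apply sqrt_lt_R0; lra).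
    assert (HA4 : INR (S k) ^ 2 / (4 * L) <= A (S k)).
    { rewrite <- (sqrt_sqrt (A (S k))) by lra.
      replace (INR (S k) ^ 2 / (4 * L)) with ((INR (S k) / (2 * sqrt L)) * (INR (S k) / (2 * sqrt L))).
      2:{ unfold Rdiv. rewrite !Rinv_mult. replace L with (sqrt L * sqrt L) at 3 by (apply sqrt_sqrt; lra). field. lra. }
      assert (0 <= INR (S k) / (2 * sqrt L)) by (apply Rmult_le_pos; [lra| left; apply Rinv_0_lt_compat; lra]).
      apply Rmult_le_compat; lra. }
    apply (Rmult_le_reg_r (INR (S k) ^ 2 / (4 * L))). apply Rdiv_lt_0_compat; nra.
    replace (2 * L * R2 / INR (S k) ^ 2 * (INR (S k) ^ 2 / (4 * L))) with (/ 2 * R2) by (field; nra).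
    assert (0 <= f (x (S k)) - f xs) by lra.
    assert ((f (x (S k)) - f xs) * (INR (S k) ^ 2 / (4 * L)) <= (f (x (S k)) - f xs) * A (S k)) by (apply Rmult_le_compat_l; lra).
    lra.
  - specialize (Hr2 k).
    assert (Hpow : 0 <= (1 - q) ^ k) by (apply pow_le; lra).
    assert (0 <= f (x (S k)) - f xs) by lra.
    assert (0 <= (1 - q) ^ k * L * R2) by (apply Rmult_le_pos; [apply Rmult_le_pos|]; lra).
    assert (H1 : f (x (S k)) - f xs <= (f (x (S k)) - f xs) * (L * A (S k) * (1 - q) ^ k)) by nra.
    assert (H2 : (f (x (S k)) - f xs) * (L * A (S k) * (1 - q) ^ k) = (A (S k) * (f (x (S k)) - f xs)) * ((1 - q) ^ k * L)) by ring.
    assert (H3 : (A (S k) * (f (x (S k)) - f xs)) * ((1 - q) ^ k * L) <= / 2 * R2 * ((1 - q) ^ k * L))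
      by (apply Rmult_le_compat_r; [apply Rmult_le_pos|]; lra).
    lra.
Qed.

Theorem mainTheorem7 (n : nat) (f : vec n -> R) (g : vec n -> vec n) (L mu : R)
  (xs x0 : vec n) (opt : agm_option)
  (x v y : nat -> vec n) (beta h a A tau : nat -> R) :
  0 < mu -> mu < L ->
  L_smooth f g L ->
  strongly_convex f g mu ->
  (forall z, f xs <= f z) ->
  AGMsDR_SC_run opt f g L mu x0 x v y beta h a A tau ->
  (forall k, g (y k) <> vzero) ->
  forall k : nat, (1 <= k)%nat ->
    f (x k) - f xs <=
    Rmin (2 * L * (norm2 (vsub x0 xs)) ^ 2 / (INR k) ^ 2)
         ((1 - sqrt (mu / L)) ^ (k - 1) * L * (norm2 (vsub x0 xs)) ^ 2).
Proof. exact (main_proof n f g L mu xs x0 opt x v y beta h a A tau). Qed.
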